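(* In the setting of the context, there exist $\bar k_\Psi\in\mathbb N$ and $\alpha_\Psi>0$ such that for every integer $k\ge\bar k_\Psi$, $\|\Psi^{(k)}\|_F\le\alpha_\Psi\,\|H^{(k)}_O\|_F\,\|H^{(k)}\|_F$, where $H^{(k)}:=Z^{(k)}-Z_\star$.
   Context: $\mathbb S^n$: real symmetric matrices, trace inner product, Frobenius norm; $\Pi_{\mathbb S^n_+}$ the projection onto the PSD cone. SDP pair: min $\langle C,X\rangle$ s.t. $\mathcal AX=b$, $X\succeq0$ / max $b^\top y$ s.t. $\mathcal A^*y+S=C$, $S\succeq0$, with $C,A_i\in\mathbb S^n$, $\mathcal AX=(\langle A_i,X\rangle)_i$ surjective, $\mathcal A^*y=\sum y_iA_i$, and a nonempty set of KKT points (primal–dual feasible with $\langle X,S\rangle=0$). $\mathcal P=\mathcal A^*(\mathcal A\mathcal A^* )^{-1}\mathcal A$. One-step ADMM with $\sigma>0$: $Z^{(k+1)}=\mathcal P(-2\Pi_{\mathbb S^n_+}(Z^{(k)})+Z^{(k)})+\Pi_{\mathbb S^n_+}(Z^{(k)})+\mathcal A^*(\mathcal A\mathcal A^* )^{-1}b+\sigma\mathcal PC-\sigma C$. Assume $Z^{(k)}\to Z_\star=X_\star-\sigma S_\star$ with $(X_\star,y_\star,S_\star)$ a KKT point satisfying $\operatorname{rank}X_\star+\operatorname{rank}S_\star=n$. Then $Z_\star=Q_\star\operatorname{diag}(\lambda_1,\dots,\lambda_n)Q_\star^\top$ for an orthogonal $Q_\star$, $\lambda_1\ge\dots\ge\lambda_r>0>\lambda_{r+1}\ge\dots\ge\lambda_n$,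 $r=\operatorname{rank}X_\star$. $\Theta_{ij}=\lambda_j/(\lambda_j-\lambda_{i+r})$ ($i\in[n-r],j\in[r]$), $\Omega=\begin{pmatrix}E_r&\Theta^\top\\\Theta&0\end{pmatrix}$, $\mathcal D(H)=Q_\star(\Omega\circ(Q_\star^\top HQ_\star))Q_\star^\top$ ($\circ$ Hadamard). $\Psi^{(k)}:=(\mathrm{Id}-2\mathcal P)\big(\Pi_{\mathbb S^n_+}(Z^{(k)})-\Pi_{\mathbb S^n_+}(Z_\star)-\mathcal D(Z^{(k)}-Z_\star)\big)$. For $H\in\mathbb S^n$, $H_O\in\mathbb R^{(n-r)\times r}$ denotes the lower-left block of $Q_\star^\top HQ_\star=\begin{pmatrix}H_X&H_O^\top\\H_O&H_S\end{pmatrix}$. *)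

(* Defs.v *)
From HB Require Import structures.
From mathcomp Require Import all_boot all_order all_algebra.
From mathcomp Require Import boolp classical_sets reals.
Set Implicit Arguments. Unset Strict Implicit. Unset Printing Implicit Defensive.
Import Order.TTheory GRing.Theory Num.Theory.
Local Open Scope ring_scope.

Section SDPDefs.
Variable R : realType.

Definition trip (n : nat) (A B : 'M[R]_n) : R := \tr (A^T *m B).

Definition fro (p q : nat) (A : 'M[R]_(p, q)) : R :=
  Num.sqrt (\sum_(i < p) \sum_(j < q) A i j ^+ 2).

Definition symmx (n : nat) (A : 'M[R]_n) : Prop := A^T = A.

Definition psd (n : nat) (A : 'M[R]_n) : Prop :=
  symmx A /\ forall x : 'cV[R]_n, 0 <= (x^T *m A *m x) 0 0.

Definition proj_psd (n : nat) (A : 'M[R]_n) : 'M[R]_n :=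
  xget 0 (fun X : 'M[R]_n => psd X /\
            forall Y : 'M[R]_n, psd Y -> fro (A - X) <= fro (A - Y)).

Definition opA (n m : nat) (As : 'I_m -> 'M[R]_n) (X : 'M[R]_n) : 'cV[R]_m :=
  \col_i trip (As i) X.
Definition opAadj (n m : nat) (As : 'I_m -> 'M[R]_n) (y : 'cV[R]_m) : 'M[R]_n :=
  \sum_(i < m) y i 0 *: As i.
(* calA calA^* as an m x m matrix *)
Definition gram (n m : nat) (As : 'I_m -> 'M[R]_n) : 'M[R]_m :=
  \matrix_(i, j) trip (As i) (As j).
Definition projP (n m : nat) (As : 'I_m -> 'M[R]_n) (H : 'M[R]_n) : 'M[R]_n :=
  opAadj As (invmx (gram As) *m opA As H).

Definition surjective_opA (n m : nat) (As : 'I_m -> 'M[R]_n) : Prop :=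
  forall v : 'cV[R]_m, exists X : 'M[R]_n, symmx X /\ opA As X = v.

Definition KKT (n m : nat) (As : 'I_m -> 'M[R]_n) (b : 'cV[R]_m) (C : 'M[R]_n)
  (X : 'M[R]_n) (y : 'cV[R]_m) (S : 'M[R]_n) : Prop :=
  [/\ opA As X = b, psd X, opAadj As y + S = C, psd S & trip X S = 0].

Definition admm_step (n m : nat) (As : 'I_m -> 'M[R]_n) (b : 'cV[R]_m)
  (C : 'M[R]_n) (sigma : R) (Z : 'M[R]_n) : 'M[R]_n :=
  projP As (- (2%:R *: proj_psd Z) + Z) + proj_psd Z
  + opAadj As (invmx (gram As) *m b) + sigma *: projP As C - sigma *: C.

(* Omega = [[E_r, Theta^T],[Theta, 0]] with
   Theta_{ij} = lambda_j / (lambda_j - lambda_{i+r}), written on indices of 'I_n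
   (0-based: the first block is the indices i < r). *)
Definition Omega (n r : nat) (lam : 'I_n -> R) : 'M[R]_n :=
  \matrix_(i, j)
    if (i < r)%N then
      (if (j < r)%N then 1 else lam i / (lam i - lam j))
    else
      (if (j < r)%N then lam j / (lam j - lam i) else 0).

Definition calD (n r : nat) (Q : 'M[R]_n) (lam : 'I_n -> R) (H : 'M[R]_n)
  : 'M[R]_n :=
  Q *m map2_mx *%R (Omega r lam) (Q^T *m H *m Q) *m Q^T.

Definition fro_HO (n r : nat) (Q : 'M[R]_n) (H : 'M[R]_n) : R :=
  let M := Q^T *m H *m Q in
  Num.sqrt (\sum_(i < n | (r <= i)%N) \sum_(j < n | (j < r)%N) M i j ^+ 2).

Definition Psi (n m r : nat) (As : 'I_m -> 'M[R]_n) (Q : 'M[R]_n)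
  (lam : 'I_n -> R) (Zs Zk : 'M[R]_n) : 'M[R]_n :=
  let W := proj_psd Zk - proj_psd Zs - calD r Q lam (Zk - Zs) in
  W - 2%:R *: projP As W.

End SDPDefs.

(* Main.v *)
Require Import Defs.
From HB Require Import structures.
From mathcomp Require Import all_boot all_order all_algebra.
From mathcomp Require Import boolp classical_sets reals.
From mathcomp Require Import topology normedtype derive.
From mathcomp Require Import ring lra.
Import Order.TTheory GRing.Theory Num.Theory.
Import numFieldNormedType.Exports.
Local Open Scope ring_scope.

Section Impl.
Set Implicit Arguments. Unset Strict Implicit. Unset Printing Implicit Defensive.
Section B.
Variable R : realType.
Variable n : nat.
Implicit Types M N P X Y W A : 'M[R]_n.

Definition sqm M := \sum_i \sum_j M i j ^+ 2.
Definition ipm M N := \sum_i \sum_j M i j * N i j.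

Lemma sqm_ge0 M : 0 <= sqm M.
Proof. by apply: sumr_ge0 => i _; apply: sumr_ge0 => j _; exact: sqr_ge0. Qed.

Lemma sqm_entry M i j : M i j ^+ 2 <= sqm M.
Proof.
rewrite /sqm (bigD1 i) //= (bigD1 j) //= -addrA lerDl.
apply: addr_ge0; first by apply: sumr_ge0 => k _; exact: sqr_ge0.
by apply: sumr_ge0 => k _; apply: sumr_ge0 => l _; exact: sqr_ge0.
Qed.

Lemma ipmC M N : ipm M N = ipm N M.
Proof. by apply: eq_bigr => i _; apply: eq_bigr => j _; rewrite mulrC. Qed.

Lemma ipmDr M N P : ipm M (N + P) = ipm M N + ipm M P.
Proof.
rewrite /ipm -big_split; apply: eq_bigr => i _; rewrite -big_split.
by apply: eq_bigr => j _; rewrite mxE mulrDr.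
Qed.

Lemma ipmZr M N t : ipm M (t *: N) = t * ipm M N.
Proof.
rewrite /ipm mulr_sumr; apply: eq_bigr => i _; rewrite mulr_sumr.
by apply: eq_bigr => j _; rewrite mxE; ring.
Qed.

Lemma ipmNr M N : ipm M (- N) = - ipm M N.
Proof. by rewrite -scaleN1r ipmZr mulN1r. Qed.

Lemma ipmBr M N P : ipm M (N - P) = ipm M N - ipm M P.
Proof. by rewrite ipmDr ipmNr. Qed.

Lemma ipmDl M N P : ipm (N + P) M = ipm N M + ipm P M.
Proof. by rewrite ipmC ipmDr ![ipm M _]ipmC. Qed.

Lemma ipmBl M N P : ipm (N - P) M = ipm N M - ipm P M.
Proof. by rewrite ipmC ipmBr ![ipm M _]ipmC. Qed.

Lemma sqmE M : sqm M = ipm M M.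
Proof. by apply: eq_bigr => i _; apply: eq_bigr => j _; rewrite expr2. Qed.

Lemma sqmZ M t : sqm (t *: M) = t ^+ 2 * sqm M.
Proof.
rewrite /sqm mulr_sumr; apply: eq_bigr => i _; rewrite mulr_sumr.
by apply: eq_bigr => j _; rewrite mxE exprMn.
Qed.

Lemma sqmB M N : sqm (M - N) = sqm M - 2 * ipm M N + sqm N.
Proof. rewrite !sqmE ipmBl !ipmBr (ipmC N M); ring. Qed.

Lemma sqm_eq0 M : sqm M <= 0 -> M = 0.
Proof.
move=> h; have h0 : sqm M = 0 by apply/eqP; rewrite eq_le h sqm_ge0.
apply/matrixP => i j; rewrite mxE.
move/eqP: h0; rewrite psumr_eq0; last by move=> k _; apply: sumr_ge0 => l _; exact: sqr_ge0.
move=> /allP /(_ i (mem_index_enum _)) /=; rewrite psumr_eq0; last by move=> l _; exact: sqr_ge0.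
by move=> /allP /(_ j (mem_index_enum _)) /=; rewrite sqrf_eq0 => /eqP.
Qed.

Lemma small_le0 (a b : R) : (forall t, 0 < t <= 1 -> a <= t * b) -> a <= 0.
Proof.
move=> h; rewrite leNgt; apply/negP => a0.
have hb := normr_ge0 b.
pose t := a / (a + `|b| + 1).
have hd : 0 < a + `|b| + 1 by lra.
have t0 : 0 < t by rewrite /t divr_gt0.
have t1 : t <= 1 by rewrite /t ler_pdivrMr // mul1r; lra.
have := h t; rewrite t0 t1 => /(_ isT) hab.
have : t * b <= t * `|b| by rewrite ler_pM2l // ler_norm.
have : t * `|b| < a.
  rewrite /t mulrAC ltr_pdivrMr // ; nra.
lra.
Qed.

Definition qf (x : 'cV[R]_n) M := (x^T *m M *m x) 0 0.

Lemma qfD x M N : qf x (M + N) = qf x M + qf x N.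
Proof. by rewrite /qf mulmxDr mulmxDl mxE. Qed.
Lemma qfZ x M t : qf x (t *: M) = t * qf x M.
Proof. by rewrite /qf -scalemxAr -scalemxAl mxE. Qed.

Lemma psd_comb X W t : psd X -> psd W -> 0 <= t <= 1 -> psd (X + t *: (W - X)).
Proof.
move=> [sX pX] [sW pW] /andP[t0 t1]; split.
  by rewrite /symmx linearD /= linearZ /= linearB /= sX sW.
move=> x; have -> : X + t *: (W - X) = (1 - t) *: X + t *: W.
  by rewrite scalerBr scalerBl scale1r; rewrite addrA addrAC.
rewrite -/(qf x _) qfD !qfZ.
have := pX x; have := pW x; rewrite /qf => a b.
apply: addr_ge0; apply: mulr_ge0 => //; lra.
Qed.

Lemma psd_conj X (S : 'M[R]_n) : psd X -> psd (S *m X *m S^T).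
Proof.
move=> [sX pX]; split.
  by rewrite /symmx !trmx_mul trmxK sX mulmxA.
move=> x; have := pX (S^T *m x).
by rewrite trmx_mul trmxK !mulmxA.
Qed.

Definition isproj A X := psd X /\ forall Y, psd Y -> sqm (A - X) <= sqm (A - Y).

Lemma proj_VI A X : isproj A X -> forall W, psd W -> ipm (A - X) (W - X) <= 0.
Proof.
move=> [pX mX] W pW.
have h : forall t, 0 < t <= 1 -> 2 * ipm (A - X) (W - X) <= t * sqm (W - X).
  move=> t /andP[t0 t1].
  have ht : 0 <= t <= 1 by rewrite (ltW t0) t1.
  have := mX _ (psd_comb pX pW ht).
  rewrite (_ : A - (X + t *: (W - X)) = (A - X) - t *: (W - X)); last first.
    by rewrite opprD addrA.
  rewrite [sqm (A - X - _)]sqmB ipmZr sqmZ => hh.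
  have : 0 <= t * (t * sqm (W - X) - 2 * ipm (A - X) (W - X)) by lra.
  by rewrite pmulr_rge0 // subr_ge0.
have := small_le0 h; lra.
Qed.

Lemma VI_proj A X : psd X -> (forall W, psd W -> ipm (A - X) (W - X) <= 0) -> isproj A X.
Proof.
move=> pX h; split => // Y pY.
have -> : A - Y = (A - X) - (Y - X) by rewrite opprB addrA subrK.
rewrite [sqm (_ - (Y - X))]sqmB; have := h Y pY; have := sqm_ge0 (Y - X); lra.
Qed.

Lemma proj_unique A X1 X2 : isproj A X1 -> isproj A X2 -> X1 = X2.
Proof.
move=> h1 h2.
have a := proj_VI h1 (proj1 h2); have b := proj_VI h2 (proj1 h1).
suff : sqm (X2 - X1) <= 0 by move/sqm_eq0/eqP; rewrite subr_eq0 => /eqP.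
have e : ipm (A - X2) (X1 - X2) = - ipm (A - X2) (X2 - X1).
  by rewrite -ipmNr opprB.
rewrite sqmE; move: a b; rewrite e.
rewrite (_ : X2 - X1 = (A - X1) - (A - X2)) ?ipmBl; last by apply/matrixP => i j; rewrite !mxE; ring.
lra.
Qed.

Lemma proj_nonexp A B XA XB : isproj A XA -> isproj B XB -> sqm (XA - XB) <= sqm (A - B).
Proof.
move=> hA hB.
have a := proj_VI hA (proj1 hB); have b := proj_VI hB (proj1 hA).
have e1 : ipm (B - XB) (XA - XB) + ipm (A - XA) (XB - XA) =
          sqm (XA - XB) - ipm (A - B) (XA - XB).
  rewrite sqmE -(opprB XA XB) ipmNr.
  rewrite !ipmBl; ring.
have hab : 2 * ipm (A - B) (XA - XB) <= sqm (A - B) + sqm (XA - XB).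
  have := sqm_ge0 ((A - B) - (XA - XB)); rewrite sqmB; lra.
lra.
Qed.

Lemma ipm_tr M N : ipm M N = \tr (M^T *m N).
Proof.
rewrite /ipm /mxtrace exchange_big; apply: eq_bigr => j _.
by rewrite mxE; apply: eq_bigr => i _; rewrite mxE.
Qed.

Lemma quad0 (b c : R) : (forall t, t * b + t ^+ 2 * c <= 0) -> b = 0.
Proof.
move=> h.
have h1 : b <= 0.
  apply: (@small_le0 b (- c)) => t /andP[t0 _].
  by have := h t; rewrite expr2 => hh; rewrite -(ler_pM2l t0); nra.
have h2 : - b <= 0.
  apply: (@small_le0 (- b) (- c)) => t /andP[t0 _].
  by have := h (- t); rewrite expr2 => hh; rewrite -(ler_pM2l t0); nra.
lra.
Qed.

Lemma W_expand X S t :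
  (1%:M + t *: S) *m X *m (1%:M + t *: S)^T - X =
  t *: (S *m X + X *m S^T) + t ^+ 2 *: (S *m X *m S^T).
Proof.
rewrite linearD /= trmx1 linearZ /= !mulmxDl !mulmxDr !mul1mx !mulmx1.
rewrite -!scalemxAl -!scalemxAr ?mulmxA scalerA -expr2 scalerDr.
move: (t *: (X *m S^T)) (t *: (S *m X)) (t ^+ 2 *: (S *m X *m S^T)) => a b c.
by apply/matrixP => i j; rewrite !mxE; ring.
Qed.

Lemma proj_comm A X : symmx A -> isproj A X -> X *m (X - A) = 0.
Proof.
move=> sA hX; have [[sX pX] _] := hX.
set N := A - X.
have sN : N^T = N by rewrite /N linearB /= sA sX.
suff h : X *m N = 0 by rewrite -(opprB A X) mulmxN -/N h oppr0.
set S := (X *m N)^T.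
have hb : forall t, t * ipm N (S *m X + X *m S^T) + t ^+ 2 * ipm N (S *m X *m S^T) <= 0.
  move=> t; have := proj_VI hX (psd_conj (1%:M + t *: S) (conj sX pX)).
  by rewrite W_expand ipmDr !ipmZr.
have := quad0 hb; rewrite ipmDr !ipm_tr sN.
rewrite mxtrace_mulC -[X in _ + X = _]mxtrace_tr !trmx_mul trmxK sN sX.
rewrite -mulr2n => /eqP; rewrite mulrn_eq0 /= => /eqP.
rewrite -mulmxA -[S]trmxK -ipm_tr /S trmxK -sqmE => /eqP; rewrite eq_le => /andP[h _].
exact: sqm_eq0.
Qed.
End B.

Section S.
Local Open Scope classical_set_scope.
Variable R : realType.
Lemma cont_sum (T : topologicalType) (I : Type) (s : seq I) (F : I -> T -> R) :
  (forall i, continuous (F i)) -> continuous (fun v => \sum_(i <- s) F i v).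
Proof.
move=> cF; elim: s => [|a s IH].
  have -> : (fun v => \sum_(i <- [::]) F i v) = (fun=> 0) by apply: funext => v; rewrite big_nil.
  exact: cst_continuous.
have -> : (fun v => \sum_(i <- a :: s) F i v) = (F a \+ fun v => \sum_(i <- s) F i v).
  by apply: funext => v; rewrite big_cons.
by move=> x; apply: continuousD; [exact: cF|exact: IH].
Qed.

Variable n : nat.
Definition vm (v : 'rV[R]_(n * n)) : 'M[R]_n := vec_mx v.
Lemma vmE v i j : vm v i j = v 0 (mxvec_index i j).
Proof. by rewrite /vm -{2}(vec_mxK v) mxvecE. Qed.

Lemma cont_vm i j : continuous (fun v : 'rV[R]_(n*n) => vm v i j).
Proof.
have -> : (fun v : 'rV[R]_(n*n) => vm v i j) = (fun v => v 0 (mxvec_index i j)).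
  by apply: funext => v; rewrite vmE.
exact: coord_continuous.
Qed.

Lemma cont_sq (A : 'M[R]_n) :
  continuous (fun v => \sum_i \sum_j (A - vm v) i j ^+ 2).
Proof.
apply: cont_sum => i; apply: cont_sum => j.
have -> : (fun v => (A - vm v) i j ^+ 2) =
   ((fun v => A i j - vm v i j) \* (fun v => A i j - vm v i j)).
  by apply/funext => v /=; rewrite !mxE expr2.
have h : continuous (fun v : 'rV[R]_(n*n) => A i j - vm v i j).
  move=> x; apply: (@continuousB _ _ _ (fun=> A i j) (fun v => vm v i j)).
    exact: cst_continuous.
  exact: cont_vm.
by move=> x; apply: continuousM; apply: h.
Qed.

Lemma psd_closed : closed [set v : 'rV[R]_(n*n) | psd (vm v)].
Proof.
have -> : [set v : 'rV[R]_(n*n) | psd (vm v)] =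
  (\bigcap_(ij in [set: 'I_n * 'I_n]) [set v | vm v ij.1 ij.2 - vm v ij.2 ij.1 = 0])
  `&` (\bigcap_(x in [set: 'cV[R]_n]) [set v | 0 <= (x^T *m vm v *m x) 0 0]).
  apply/seteqP; split => v /=.
    move=> [sy ps]; split => [[i j] _|x _] //=.
    by rewrite -{1}sy mxE subrr.
  move=> [sy ps]; split => //; last by move=> x; exact: ps.
  apply/matrixP => i j; rewrite mxE; apply/eqP; rewrite -subr_eq0; apply/eqP.
  exact: (sy (j, i)).
apply: closedI.
  apply: closed_bigI => -[i j] _.
  apply: (@preimage_closed _ _ (fun v : 'rV[R]_(n*n) => vm v i j - vm v j i) [set x | x = 0]); last exact: closed_eq.
  move=> v _; apply: (@continuousB _ _ _ (fun v => vm v i j) (fun v => vm v j i)); exact: cont_vm.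
apply: closed_bigI => x _.
apply: (@preimage_closed _ _ (fun v : 'rV[R]_(n*n) => (x^T *m vm v *m x) 0 0) [set y | 0 <= y]); last exact: closed_ge.
have -> : (fun v => (x^T *m vm v *m x) 0 0) =
   (fun v => \sum_l \sum_k (x k 0 * x l 0) * vm v k l).
  apply/funext => w; rewrite !mxE; apply: eq_bigr => l _; rewrite !mxE big_distrl /=.
  by apply: eq_bigr => k _; rewrite !mxE; ring.
have hc : continuous (fun v : 'rV[R]_(n*n) => \sum_l \sum_k (x k 0 * x l 0) * vm v k l).
  apply: cont_sum => l; apply: cont_sum => k w.
  apply: (continuousM (s := fun=> x k 0 * x l 0) (t := fun v => vm v k l)).
    exact: cst_continuous.
  exact: cont_vm.
by move=> v _; exact: hc.
Qed.

Lemma exists_min (A : 'M[R]_n) :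
  exists X, psd X /\ forall Y, psd Y -> sqm (A - X) <= sqm (A - Y).
Proof.
pose Mb : R := 3 * (sqm A + 1).
have Mb0 : 0 <= Mb by rewrite /Mb; apply: mulr_ge0 => //; apply: addr_ge0 => //; exact: sqm_ge0.
pose K := [set v : 'rV[R]_(n*n) | psd (vm v)] `&` [set v | forall k, `|v 0 k| <= Mb].
have Kcl : closed K.
  apply: closedI; first exact: psd_closed.
  match goal with |- closed ?S => have -> : S =
     \bigcap_(k in [set: 'I_(n*n)]) ((fun v : 'rV[R]_(n*n) => `|v 0 k|) @^-1` [set y | y <= Mb])
    by (apply/seteqP; split => v /= h; [move=> k _ | move=> k]; apply: h)
  end.
  apply: closed_bigI => k _; apply: preimage_closed; last exact: closed_le.
  move=> v _; apply: continuous_comp; first exact: coord_continuous.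
  exact: norm_continuous.
have Kbd : [bounded x | x in K].
  rewrite /bounded_near; near=> M => v [_ hv] /=.
  have hM : Mb <= M by near: M; apply: nbhs_pinfty_ge; rewrite num_real.
  rewrite [leLHS]/Num.norm /= mx_normrE; apply: bigmax_le => [|[i k] _] /=.
    exact: le_trans hM.
  by rewrite (ord1 i); apply: le_trans (hv k) hM.
have Kcp : compact K by exact: bounded_closed_compact.
have vm0 : vm 0 = 0 by apply/matrixP => i j; rewrite vmE !mxE.
have K0 : K 0.
  split => /=.
    rewrite vm0; split; first by rewrite /symmx trmx0.
    by move=> x; rewrite mulmx0 mul0mx mxE.
  by move=> k; rewrite mxE normr0.
have [c cK cmin] := compact_EVT_min (ex_intro _ 0 K0) Kcp
   (continuous_subspaceT (cont_sq (A:=A))).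
move: cK; rewrite inE => cK.
exists (vm c); split; first by case: cK.
move=> Y psdY.
have hvm : vm (mxvec Y) = Y by rewrite /vm mxvecK.
have [YK|YnK] := pselect (K (mxvec Y)).
  by have := cmin (mxvec Y); rewrite inE hvm => /(_ YK).
have h0 : sqm (A - vm c) <= sqm A.
  have := cmin 0; rewrite inE => /(_ K0).
  by rewrite vm0 subr0.
apply: (le_trans h0).
have : ~ (forall k, `|mxvec Y 0 k| <= Mb) by move=> h; apply: YnK; split; [rewrite /= hvm | exact: h].
move=> /existsNP [k /negP]; rewrite -ltNge => hk.
have [[i j] hij] : exists ij : 'I_n * 'I_n, mxvec_index ij.1 ij.2 = k.
  case/mxvec_indexP: k hk => i j _; by exists (i, j).
move: hk; rewrite -hij mxvecE /= => hk.
apply: (le_trans _ (sqm_entry _ i j)); rewrite !mxE.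
have hA := sqm_entry A i j.
have s0 := sqm_ge0 A.
have ha : `|A i j| <= sqm A + 1.
  rewrite -(@ler_pXn2r _ 2) ?nnegrE ?normr_ge0 ?addr_ge0 //.
  rewrite real_normK ?num_real //; apply: (le_trans hA); nra.
have hd : 2 * (sqm A + 1) <= `|A i j - Y i j|.
  rewrite distrC; apply: le_trans (lerB_dist _ _).
  by move: hk; rewrite /Mb => hk; lra.
have := hd; rewrite -(@ler_pXn2r _ 2) ?nnegrE ?normr_ge0 //; last by lra.
rewrite real_normK ?num_real // => h2.
apply: le_trans h2; nra.
Unshelve. all: by end_near.
Qed.
End S.

Section C.
Variable R : realType.
Variable n : nat.
Implicit Types M N E F H : 'M[R]_n.

Definition l1 M := \sum_i \sum_j `|M i j|.
Definition msk (p q : pred 'I_n) M : 'M[R]_n :=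
  \matrix_(i, j) if p i && q j then M i j else 0.
Definition L p q M := l1 (msk p q M).

Lemma l1_ge0 M : 0 <= l1 M.
Proof. by apply: sumr_ge0 => i _; apply: sumr_ge0 => j _. Qed.

Lemma L_ge0 p q M : 0 <= L p q M.
Proof. exact: l1_ge0. Qed.

Lemma l1D M N : l1 (M + N) <= l1 M + l1 N.
Proof.
rewrite /l1 -big_split; apply: ler_sum => i _; rewrite -big_split.
by apply: ler_sum => j _; rewrite mxE ler_normD.
Qed.

Lemma l1N M : l1 (- M) = l1 M.
Proof. by apply: eq_bigr => i _; apply: eq_bigr => j _; rewrite mxE normrN. Qed.

Lemma l1B M N : l1 (M - N) <= l1 M + l1 N.
Proof. by apply: le_trans (l1D _ _) _; rewrite l1N. Qed.

Lemma l1_entry M i j : `|M i j| <= l1 M.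
Proof.
rewrite /l1 (bigD1 i) //= (bigD1 j) //= -addrA lerDl.
apply: addr_ge0; first by apply: sumr_ge0.
by apply: sumr_ge0 => k _; apply: sumr_ge0.
Qed.

Lemma l1_mul M N : l1 (M *m N) <= l1 M * l1 N.
Proof.
have h1 : l1 (M *m N) <= \sum_i \sum_j \sum_k `|M i k| * `|N k j|.
  apply: ler_sum => i _; apply: ler_sum => j _; rewrite mxE.
  by apply: le_trans (ler_norm_sum _ _ _) _; apply: ler_sum => k _; rewrite normrM.
apply: le_trans h1 _.
have h2 : \sum_i \sum_j \sum_k `|M i k| * `|N k j| =
          \sum_i \sum_k `|M i k| * (\sum_j `|N k j|).
  apply: eq_bigr => i _; rewrite exchange_big; apply: eq_bigr => k _.
  by rewrite mulr_sumr.
rewrite h2 /l1 mulr_suml; apply: ler_sum => i _; rewrite mulr_suml.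
apply: ler_sum => k _; apply: ler_wpM2l => //.
rewrite [leRHS](bigD1 k) //= lerDl; by apply: sumr_ge0 => l _; apply: sumr_ge0.
Qed.

Lemma msk_le p q M : L p q M <= l1 M.
Proof.
apply: ler_sum => i _; apply: ler_sum => j _; rewrite mxE.
by case: (p i && q j) => //=; rewrite normr0.
Qed.

Lemma mskB p q M N : msk p q (M - N) = msk p q M - msk p q N.
Proof.
apply/matrixP => i j; rewrite !mxE; case: (p i && q j) => //.
by rewrite subrr.
Qed.

Lemma LB p q M N : L p q (M - N) <= L p q M + L p q N.
Proof. by rewrite /L mskB; exact: l1B. Qed.

Lemma L_tr p q M : L p q M^T = L q p M.
Proof.
rewrite /L /l1 exchange_big; apply: eq_bigr => i _; apply: eq_bigr => j _.
by rewrite !mxE andbC.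
Qed.

Lemma L_entry (p q : pred 'I_n) (A B C : 'M[R]_n) (al be ga : R) :
  0 <= al -> 0 <= be -> 0 <= ga ->
  (forall i j, p i -> q j -> al * `|A i j| <= be * `|B i j| + ga * `|C i j|) ->
  al * L p q A <= be * L p q B + ga * L p q C.
Proof.
move=> a0 b0 c0 h.
rewrite /L /l1 !mulr_sumr -big_split; apply: ler_sum => i _.
rewrite !mulr_sumr -big_split; apply: ler_sum => j _; rewrite !mxE.
case pi: (p i); case qj: (q j) => /=; try by rewrite !normr0 !mulr0 addr0.
exact: h.
Qed.

Lemma rXS (li lj e h p d : R) : 0 < d -> d <= li -> lj <= - d ->
  li * (e - h) + e * (- lj) + p = 0 ->
  d * `|e| <= d * `|h| + 1 * `|p| /\ d * `|e - li / (li - lj) * h| <= 0 * `|h| + 1 * `|p|.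
Proof.
move=> d0 dli ljd eq.
have D0 : 0 < li - lj by lra.
have Dne : li - lj != 0 by rewrite gt_eqF.
have eD : e * (li - lj) = li * h - p by rewrite mulrBr; lra.
have eE : e = li / (li - lj) * h - p / (li - lj).
  rewrite -(mulfK Dne e) eD; field; exact: Dne.
have hp : d * (`|p| / (li - lj)) <= `|p|.
  rewrite mulrA ler_pdivrMr // mulrC; apply: ler_wpM2l => //; lra.
split.
  rewrite eE mul1r; apply: le_trans (ler_wpM2l (ltW d0) (ler_normB _ _)) _.
  rewrite mulrDr lerD //.
    rewrite normrM ger0_norm ?divr_ge0 //; try lra.
    apply: ler_wpM2l; first lra.
    rewrite -[leRHS]mul1r ler_wpM2r // ler_pdivrMr //; lra.
  by rewrite normf_div (gtr0_norm D0).
have -> : e - li / (li - lj) * h = - (p / (li - lj)) by rewrite eE; field; exact: Dne.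
by rewrite normrN normf_div (gtr0_norm D0) mul0r add0r mul1r.
Qed.

Lemma rXX (li e h p d : R) : 0 < d -> d <= li ->
  li * (e - h) + e * 0 + p = 0 -> d * `|e - 1 * h| <= 0 * `|h| + 1 * `|p|.
Proof.
move=> d0 dli eq.
have li0 : 0 < li by lra.
have lne : li != 0 by rewrite gt_eqF.
have eD : (e - 1 * h) * li = - p by lra.
have -> : e - 1 * h = - (p / li).
  by rewrite -(mulfK lne (e - 1 * h)) eD mulNr.
rewrite normrN normf_div (gtr0_norm li0) mul0r add0r mul1r mulrA ler_pdivrMr //.
by rewrite mulrC; apply: ler_wpM2l.
Qed.

Lemma rSS (lj e h p d : R) : 0 < d -> lj <= - d ->
  0 * (e - h) + e * (- lj) + p = 0 -> d * `|e - 0 * h| <= 0 * `|h| + 1 * `|p|.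
Proof.
move=> d0 ljd eq.
have l0 : 0 < - lj by lra.
have lne : - lj != 0 by rewrite gt_eqF.
have eD : (e - 0 * h) * (- lj) = - p by lra.
have -> : e - 0 * h = - p / (- lj).
  by rewrite -(mulfK lne (e - 0 * h)) eD.
rewrite normf_div normrN (gtr0_norm l0) mul0r add0r mul1r mulrA ler_pdivrMr //.
rewrite mulrC; apply: ler_wpM2l => //; lra.
Qed.

Lemma L_eq (p q : pred 'I_n) (A B : 'M[R]_n) :
  (forall i j, p i -> q j -> A i j = B i j) -> L p q A = L p q B.
Proof.
move=> h; apply: eq_bigr => i _; apply: eq_bigr => j _; rewrite !mxE.
by case pi: (p i); case qj: (q j) => //=; rewrite h.
Qed.

Variable r : nat.
Definition pX : pred 'I_n := fun i => (i < r)%N.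
Definition pS : pred 'I_n := fun i => ~~ (i < r)%N.

Lemma msk_mul p q E F :
  msk p q (E *m F) = msk p pX E *m msk pX q F + msk p pS E *m msk pS q F.
Proof.
apply/matrixP => i j; rewrite !mxE -big_split /=.
case pi: (p i); case qj: (q j) => /=.
- apply: eq_bigr => k _; rewrite !mxE pi qj /pX /pS /=.
  by case: (k < r)%N => /=; ring.
- by apply/esym; apply: big1 => k _; rewrite !mxE pi qj /= !andbF !mulr0 addr0.
- by apply/esym; apply: big1 => k _; rewrite !mxE pi qj /= !mul0r addr0.
- by apply/esym; apply: big1 => k _; rewrite !mxE pi qj /= !mul0r addr0.
Qed.

Lemma L_mul p q E F :
  L p q (E *m F) <= L p pX E * L pX q F + L p pS E * L pS q F.
Proof.
rewrite /L msk_mul; apply: le_trans (l1D _ _) _.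
by apply: lerD; apply: l1_mul.
Qed.

Lemma l1_split M : l1 M = L pX pX M + L pX pS M + L pS pX M + L pS pS M.
Proof.
rewrite /L /l1 -!big_split; apply: eq_bigr => i _; rewrite -!big_split.
apply: eq_bigr => j _; rewrite !mxE /pX /pS /=.
by case: (i < r)%N; case: (j < r)%N => /=; rewrite ?normr0 ?addr0 ?add0r.
Qed.

Variable lam : 'I_n -> R.
Variable del : R.
Hypothesis del0 : 0 < del.
Hypothesis hlX : forall i : 'I_n, (i < r)%N -> del <= lam i.
Hypothesis hlS : forall i : 'I_n, ~~ (i < r)%N -> lam i <= - del.

Definition dp (i : 'I_n) := if (i < r)%N then lam i else 0.
Definition en (i : 'I_n) := if (i < r)%N then 0 else - lam i.

Lemma block_est (E H : 'M[R]_n) (eta : R) :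
  E^T = E -> H^T = H ->
  (forall i j, dp i * (E - H) i j + E i j * en j + (E *m (E - H)) i j = 0) ->
  l1 E <= eta -> l1 H <= eta -> 6 * eta <= del ->
  del * l1 (E - map2_mx *%R (Omega r lam) H) <= 53 * eta * L pS pX H.
Proof.
move=> sE sH heq lE lH hd.
set F := E - H; set P := E *m F; set W := E - map2_mx *%R (Omega r lam) H.
set o := L pS pX H.
have eta0 : 0 <= eta by apply: le_trans lH; exact: l1_ge0.
have o0 : 0 <= o by exact: L_ge0.
have oeta : o <= eta by apply: le_trans lH; exact: msk_le.
have oXS : L pX pS H = o by rewrite -L_tr sH.
have eW : forall i j, W i j = E i j - Omega r lam i j * H i j.
  by move=> i j; rewrite !mxE.
have eF : forall i j, F i j = E i j - H i j by move=> i j; rewrite !mxE.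
have XS1 : del * L pX pS E <= del * L pX pS H + 1 * L pX pS P.
  apply: L_entry => [||| i j pi qj]; rewrite ?ler01 ?lexx ?(ltW del0) //.
  have := heq i j; rewrite /dp /en /pX /pS /= in pi qj *; rewrite (negbTE qj) pi eF => h.
  exact: (proj1 (rXS del0 (hlX pi) (hlS qj) h)).
have XS2 : del * L pX pS W <= 0 * L pX pS H + 1 * L pX pS P.
  apply: L_entry => [||| i j pi qj]; rewrite ?ler01 ?lexx ?(ltW del0) //.
  have := heq i j; rewrite /dp /en /pX /pS /= in pi qj *; rewrite (negbTE qj) pi eF eW => h.
  by rewrite mxE pi (negbTE qj); exact: (proj2 (rXS del0 (hlX pi) (hlS qj) h)).
have XX : del * L pX pX W <= 0 * L pX pX H + 1 * L pX pX P.
  apply: L_entry => [||| i j pi qj]; rewrite ?ler01 ?lexx ?(ltW del0) //.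
  have := heq i j; rewrite /dp /en /pX /pS /= in pi qj *; rewrite qj pi eF eW => h.
  by rewrite mxE pi qj; exact: (rXX del0 (hlX pi) h).
have SS : del * L pS pS W <= 0 * L pS pS H + 1 * L pS pS P.
  apply: L_entry => [||| i j pi qj]; rewrite ?ler01 ?lexx ?(ltW del0) //.
  have := heq i j; rewrite /dp /en /pX /pS /= in pi qj *.
  rewrite (negbTE qj) (negbTE pi) eF eW => h.
  by rewrite mxE (negbTE pi) (negbTE qj); exact: (rSS del0 (hlS qj) h).
have sF : F^T = F by rewrite /F linearB /= sE sH.
have sW : W^T = W.
  apply/matrixP => i j; rewrite mxE !eW.
  have e1 := congr1 (fun M => M i j) sE; have e2 := congr1 (fun M => M i j) sH.
  rewrite /= !mxE in e1 e2; rewrite e1 e2; congr (_ - _ * _).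
  by rewrite !mxE; case: (i < r)%N; case: (j < r)%N.
have hd' : 0 <= del - 6 * eta by rewrite subr_ge0.
set a := L pX pS E.
have aS : L pS pX E = a by rewrite -L_tr sE.
have a0 : 0 <= a by exact: L_ge0.
have fXS : L pX pS F <= a + o by rewrite -oXS; exact: LB.
have fSX : L pS pX F <= a + o by rewrite -L_tr sF.
have fSS : L pS pS F <= 2 * eta.
  apply: le_trans (LB _ _ _ _) _.
  have := le_trans (msk_le pS pS E) lE; have := le_trans (msk_le pS pS H) lH; lra.
have x1 : L pX pX E <= eta by exact: le_trans (msk_le _ _ _) lE.
have x10 := L_ge0 pX pX E.
have fXS0 := L_ge0 pX pS F; have fSS0 := L_ge0 pS pS F; have fSX0 := L_ge0 pS pX F.
have PXS : L pX pS P <= eta * (a + o) + a * (2 * eta).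
  apply: le_trans (L_mul _ _ _ _) _.
  by apply: lerD; apply: ler_pM.
have ha : a <= 3 * o.
  have h : del * (a - 3 * o) <= 0.
    have := mulr_ge0 hd' a0.
    have := mulr_ge0 hd' o0.
    have := mulr_ge0 (ltW del0) o0.
    move: XS1 PXS; rewrite -/a oXS; lra.
  by move: h; rewrite pmulr_rle0 // subr_le0.
have PXS' : L pX pS P <= 10 * eta * o.
  apply: le_trans PXS _.
  have := ler_wpM2l eta0 ha; have := ler_wpM2r eta0 ha; lra.
have wXX : L pX pX W = L pX pX F.
  apply: L_eq => i j pi qj; rewrite eW eF !mxE.
  by rewrite /pX /= in pi qj; rewrite pi qj mul1r.
have wSS : L pS pS W = L pS pS E.
  apply: L_eq => i j pi qj; rewrite eW !mxE.
  by rewrite /pS /= in pi qj; rewrite (negbTE pi) (negbTE qj) mul0r subr0.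
have wSX : L pS pX W = L pX pS W by rewrite -L_tr sW.
have PXX : L pX pX P <= eta * L pX pX F + (3 * o) * (4 * o).
  apply: le_trans (L_mul _ _ _ _) _; apply: lerD.
    by apply: ler_wpM2r => //; exact: L_ge0.
  by apply: ler_pM => //; lra.
have PSS : L pS pS P <= (3 * o) * (4 * o) + L pS pS E * (2 * eta).
  apply: le_trans (L_mul _ _ _ _) _; apply: lerD.
    by rewrite aS; apply: ler_pM => //; lra.
  by apply: ler_wpM2l => //; exact: L_ge0.
have wxx0 := L_ge0 pX pX F; have wss0 := L_ge0 pS pS E.
have o2 : o * o <= eta * o by apply: ler_wpM2r.
have hXX : del * L pX pX F <= 15 * eta * o.
  have := mulr_ge0 hd' wxx0.
  have := mulr_ge0 (ltW del0) o0; have := mulr_ge0 eta0 o0.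
  move: XX PXX; rewrite wXX; lra.
have hSS : del * L pS pS E <= 18 * eta * o.
  have := mulr_ge0 hd' wss0.
  have := mulr_ge0 (ltW del0) o0; have := mulr_ge0 eta0 o0.
  move: SS PSS; rewrite wSS; lra.
rewrite l1_split wSX wXX wSS.
move: XS2 PXS'; lra.
Qed.
End C.

Section E.
Variable R : realType.
Variables n m : nat.
Variable As : 'I_m -> 'M[R]_n.
Implicit Types M N : 'M[R]_n.

Lemma l1Z M (a : R) : l1 (a *: M) = `|a| * l1 M.
Proof.
rewrite /l1 mulr_sumr; apply: eq_bigr => i _; rewrite mulr_sumr.
by apply: eq_bigr => j _; rewrite mxE normrM.
Qed.

Lemma l1_0 : l1 (0 : 'M[R]_n) = 0.
Proof. by rewrite /l1 big1 // => i _; rewrite big1 // => j _; rewrite mxE normr0. Qed.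

Lemma l1_sum (I : finType) (F : I -> 'M[R]_n) : l1 (\sum_i F i) <= \sum_i l1 (F i).
Proof.
elim/big_rec2: _ => [|i y1 y2 _ h]; first by rewrite l1_0.
by apply: le_trans (l1D _ _) _; rewrite lerD2l.
Qed.

Lemma opAD M N : opA As (M + N) = opA As M + opA As N.
Proof. by apply/matrixP => i j; rewrite !mxE /trip mulmxDr mxtraceD. Qed.
Lemma opAZ (a : R) M : opA As (a *: M) = a *: opA As M.
Proof. by apply/matrixP => i j; rewrite !mxE /trip -scalemxAr mxtraceZ. Qed.
Lemma opAadjD (y z : 'cV[R]_m) : opAadj As (y + z) = opAadj As y + opAadj As z.
Proof.
by rewrite /opAadj -big_split; apply: eq_bigr => i _; rewrite mxE scalerDl.
Qed.
Lemma opAadjZ (a : R) (y : 'cV[R]_m) : opAadj As (a *: y) = a *: opAadj As y.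
Proof.
by rewrite /opAadj scaler_sumr; apply: eq_bigr => i _; rewrite mxE scalerA.
Qed.
Lemma projPD M N : projP As (M + N) = projP As M + projP As N.
Proof. by rewrite /projP opAD mulmxDr opAadjD. Qed.
Lemma projPZ (a : R) M : projP As (a *: M) = a *: projP As M.
Proof. by rewrite /projP opAZ -scalemxAr opAadjZ. Qed.
Lemma projP0 : projP As 0 = 0.
Proof. by have := projPZ 0 0; rewrite !scale0r. Qed.

Definition KP := \sum_k \sum_l l1 (projP As (delta_mx k l)).
Lemma KP_ge0 : 0 <= KP.
Proof. by apply: sumr_ge0 => k _; apply: sumr_ge0 => l _; exact: l1_ge0. Qed.

Lemma projP_bound M : l1 (projP As M) <= KP * l1 M.
Proof.
have -> : projP As M = \sum_k \sum_l M k l *: projP As (delta_mx k l).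
  rewrite {1}(matrix_sum_delta M) (big_morph _ projPD projP0).
  apply: eq_bigr => k _; rewrite (big_morph _ projPD projP0).
  by apply: eq_bigr => l _; rewrite projPZ.
apply: le_trans (l1_sum _) _.
have h : forall k, l1 (\sum_l M k l *: projP As (delta_mx k l)) <=
   \sum_l l1 M * l1 (projP As (delta_mx k l)).
  move=> k; apply: le_trans (l1_sum _) _; apply: ler_sum => l _.
  rewrite l1Z; apply: ler_wpM2r; first exact: l1_ge0.
  exact: l1_entry.
apply: le_trans (ler_sum _ (fun k _ => h k)) _.
rewrite /KP mulr_suml; apply: ler_sum => k _; rewrite mulr_suml.
by apply: ler_sum => l _; rewrite mulrC.
Qed.

Lemma fro_l1 M : fro M <= l1 M.
Proof.
rewrite /fro -(ger0_norm (l1_ge0 M)) -sqrtr_sqr ler_sqrt ?sqr_ge0 // expr2.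
rewrite [X in X * _]/l1 mulr_suml; apply: ler_sum => i _.
rewrite mulr_suml; apply: ler_sum => j _.
rewrite -(real_normK (num_real (M i j))) expr2; apply: ler_pM => //.
exact: l1_entry.
Qed.

Lemma l1_tr M : l1 M^T = l1 M.
Proof.
rewrite /l1 exchange_big; apply: eq_bigr => i _; apply: eq_bigr => j _.
by rewrite mxE.
Qed.

Lemma l1_const M (c : R) : (forall i j, `|M i j| <= c) -> l1 M <= (n * n)%:R * c.
Proof.
move=> h; apply: le_trans (ler_sum _ (fun i _ => ler_sum _ (fun j _ => h i j))) _.
rewrite (eq_bigr (fun _ => c *+ n)); last by move=> i _; rewrite sumr_const card_ord.
rewrite sumr_const card_ord.
by rewrite natrM -mulrA !mulr_natl.
Qed.
End E.

Section F.
Variable R : realType.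
Variable n : nat.
Hypothesis exmin : forall A : 'M[R]_n,
  exists X, psd X /\ forall Y, psd Y -> sqm (A - X) <= sqm (A - Y).
Implicit Types M N A X : 'M[R]_n.

Lemma fro_sqm M : fro M = Num.sqrt (sqm M).
Proof. by []. Qed.

Lemma proj_pred_iff A X : (psd X /\ forall Y : 'M[R]_n, psd Y -> fro (A - X) <= fro (A - Y)) <-> isproj A X.
Proof.
split => -[pX h]; split => // Y pY; have := h Y pY; rewrite !fro_sqm ler_sqrt //;
  exact: sqm_ge0.
Qed.

Lemma proj_isproj A : isproj A (proj_psd A).
Proof.
apply/proj_pred_iff; rewrite /proj_psd.
apply: (@xgetPex _ 0 (fun X : 'M[R]_n => psd X /\ forall Y : 'M[R]_n, psd Y -> fro (A - X) <= fro (A - Y))).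
have [X hX] := exmin A; exists X; exact/proj_pred_iff.
Qed.

Lemma proj_eqX A X : isproj A X -> proj_psd A = X.
Proof.
move=> hX; have := proj_isproj A => h.
exact: proj_unique h hX.
Qed.

Lemma sym_proj A : symmx (proj_psd A).
Proof. by case: (proj_isproj A) => -[]. Qed.

Lemma fro_entry M i j : `|M i j| <= fro M.
Proof.
rewrite fro_sqm -sqrtr_sqr ler_sqrt; first exact: sqm_entry.
exact: sqm_ge0.
Qed.
End F.

Section G.
Variable R : realType.
Variable n : nat.
Implicit Types M N A X : 'M[R]_n.

Lemma symD M N : symmx M -> symmx N -> symmx (M + N).
Proof. by rewrite /symmx linearD /= => -> ->. Qed.
Lemma symZ (a : R) M : symmx M -> symmx (a *: M).
Proof. by rewrite /symmx linearZ /= => ->. Qed.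
Lemma symN M : symmx M -> symmx (- M).
Proof. by rewrite /symmx linearN /= => ->. Qed.
Lemma symB M N : symmx M -> symmx N -> symmx (M - N).
Proof. by move=> ? ?; apply: symD => //; apply: symN. Qed.

Lemma sym_opAadj m (As : 'I_m -> 'M[R]_n) y :
  (forall i, symmx (As i)) -> symmx (opAadj As y).
Proof.
move=> hA; rewrite /symmx /opAadj linear_sum /=; apply: eq_bigr => i _.
by rewrite linearZ /= (hA i).
Qed.

Lemma qf_col (Q W : 'M[R]_n) i : qf (col i Q) W = (Q^T *m W *m Q) i i.
Proof.
rewrite /qf !mxE; apply: eq_bigr => l _; rewrite !mxE; congr (_ * _).
by apply: eq_bigr => k _; rewrite !mxE.
Qed.

Lemma qf_diag (y : 'cV[R]_n) (d : 'rV[R]_n) :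
  qf y (diag_mx d) = \sum_l y l 0 * d 0 l * y l 0.
Proof.
by rewrite /qf mul_mx_diag mxE; apply: eq_bigr => l _; rewrite !mxE.
Qed.

Lemma qf_conj (Q : 'M[R]_n) x M : qf x (Q *m M *m Q^T) = qf (Q^T *m x) M.
Proof. by rewrite /qf trmx_mul trmxK !mulmxA. Qed.

Lemma ipm_conj (Q : 'M[R]_n) M N : ipm (Q *m M *m Q^T) N = ipm M (Q^T *m N *m Q).
Proof.
by rewrite !ipm_tr !trmx_mul trmxK -!mulmxA mxtrace_mulC !mulmxA.
Qed.

Lemma ipm_diag (d : 'rV[R]_n) M : ipm (diag_mx d) M = \sum_i d 0 i * M i i.
Proof.
rewrite ipm_tr tr_diag_mx mul_diag_mx /mxtrace; apply: eq_bigr => i _.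
by rewrite mxE.
Qed.

Lemma conjK (Q : 'M[R]_n) M : Q^T *m Q = 1%:M -> Q^T *m (Q *m M *m Q^T) *m Q = M.
Proof. by move=> h; rewrite !mulmxA h mul1mx -mulmxA h mulmx1. Qed.
Lemma conjK' (Q : 'M[R]_n) M : Q *m Q^T = 1%:M -> Q *m (Q^T *m M *m Q) *m Q^T = M.
Proof. by move=> h; rewrite !mulmxA h mul1mx -mulmxA h mulmx1. Qed.
End G.

Lemma zmod_id1 (R : realType) n (a b c e : 'M[R]_n) :
  (a + b) - ((a - c) + e) = c + (b - e).
Proof. by apply/matrixP => i j; rewrite !mxE; ring. Qed.

Theorem main_gen (R : realType) (n m : nat)
  (exmin : forall A : 'M[R]_n,
     exists X, psd X /\ forall Y, psd Y -> sqm (A - X) <= sqm (A - Y))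
  (C : 'M[R]_n) (As : 'I_m -> 'M[R]_n) (b : 'cV[R]_m) (sigma : R)
  (Z : nat -> 'M[R]_n)
  (Xs : 'M[R]_n) (ys : 'cV[R]_m) (Ss : 'M[R]_n)
  (Q : 'M[R]_n) (lam : 'I_n -> R) :
  symmx C ->
  (forall i, symmx (As i)) ->
  surjective_opA As ->
  0 < sigma ->
  symmx (Z 0%N) ->
  (forall k, Z k.+1 = admm_step As b C sigma (Z k)) ->
  KKT As b C Xs ys Ss ->
  (\rank Xs + \rank Ss)%N = n ->
  (forall e : R, 0 < e -> exists N : nat, forall k, (N <= k)%N ->
      fro (Z k - (Xs - sigma *: Ss)) < e) ->
  Q^T *m Q = 1%:M -> Q *m Q^T = 1%:M ->
  Xs - sigma *: Ss = Q *m diag_mx (\row_i lam i) *m Q^T ->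
  (forall i j : 'I_n, (i <= j)%N -> lam j <= lam i) ->
  (forall i : 'I_n, (i < \rank Xs)%N -> 0 < lam i) ->
  (forall i : 'I_n, (\rank Xs <= i)%N -> lam i < 0) ->
  exists kbar : nat, exists alpha : R, 0 < alpha /\
    forall k : nat, (kbar <= k)%N ->
      fro (Psi (\rank Xs) As Q lam (Xs - sigma *: Ss) (Z k))
      <= alpha * fro_HO (\rank Xs) Q (Z k - (Xs - sigma *: Ss))
               * fro (Z k - (Xs - sigma *: Ss)).
Proof.
move=> hC hAs _ _ hZ0 hstep _ _ hconv hQQ hQQ' hdec _ hpos hneg.
set r := \rank Xs in hpos hneg *.
set Zs := Xs - sigma *: Ss in hconv hdec *.
pose S := \sum_i `|lam i|^-1.
have S0 : 0 <= S by apply: sumr_ge0 => i _; rewrite invr_ge0.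
pose del := (1 + S)^-1.
have del0 : 0 < del by rewrite /del invr_gt0; lra.
have lam_nz : forall i, lam i != 0.
  move=> i; case: (ltnP i r) => hi.
    by rewrite gt_eqF // hpos.
  by rewrite lt_eqF // hneg.
have hdel : forall i, del <= `|lam i|.
  move=> i; rewrite /del -[(1 + S)^-1]mul1r ler_pdivrMr; last lra.
  have h1 : `|lam i|^-1 <= S.
    rewrite /S (bigD1 i) //= lerDl; apply: sumr_ge0 => j _; rewrite invr_ge0.
    exact: normr_ge0.
  have h2 : `|lam i| * `|lam i|^-1 = 1 by rewrite mulfV // normr_eq0.
  have h3 : 0 <= S - `|lam i|^-1 by rewrite subr_ge0.
  have := mulr_ge0 (normr_ge0 (lam i)) h3.
  have := normr_ge0 (lam i); nra.
have hlX : forall i : 'I_n, (i < r)%N -> del <= lam i.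
  by move=> i hi; have := hdel i; rewrite gtr0_norm // hpos.
have hlS : forall i : 'I_n, ~~ (i < r)%N -> lam i <= - del.
  move=> i; rewrite -leqNgt => hi; have := hdel i; rewrite ltr0_norm ?hneg //.
  by rewrite lerNr.
have symZ : forall k, symmx (Z k).
  elim => [|k IH]; first exact: hZ0.
  rewrite hstep /admm_step /projP.
  apply: symB; last exact: symZ.
  apply: symD; last by apply: symZ; exact: sym_opAadj.
  apply: symD; last exact: sym_opAadj.
  apply: symD; last exact: sym_proj.
  exact: sym_opAadj.
pose Dg := diag_mx (\row_i lam i).
pose Dp := diag_mx (\row_i dp r lam i).
pose Dn := diag_mx (\row_i en r lam i).
have hDg : Dg = Dp - Dn.
  apply/matrixP => i j; rewrite !mxE -mulrnBl; congr (_ *+ _).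
  by rewrite /dp /en; case: (i < r)%N; rewrite ?subr0 ?sub0r ?opprK.
have dp0 : forall i, 0 <= dp r lam i.
  by move=> i; rewrite /dp; case: ifP => // /hlX; lra.
have en0 : forall i, 0 <= en r lam i.
  by move=> i; rewrite /en; case: ifP => // /negbT /hlS; lra.
have dpen : forall i, dp r lam i * en r lam i = 0.
  by move=> i; rewrite /dp /en; case: ifP; rewrite ?mulr0 ?mul0r.
pose Xst := Q *m Dp *m Q^T.
have symXst : symmx Xst by rewrite /symmx /Xst !trmx_mul trmxK tr_diag_mx !mulmxA.
have symZs : symmx Zs by rewrite /symmx hdec !trmx_mul trmxK tr_diag_mx !mulmxA.
have pXst : psd Xst.
  split => // x; rewrite -/(qf x _) /Xst qf_conj qf_diag.
  by apply: sumr_ge0 => l _; rewrite mxE -mulrA mulrC -mulrA; apply: mulr_ge0 => //; rewrite -expr2 sqr_ge0.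
have pZs : isproj Zs Xst.
  apply: VI_proj => // W pW.
  have -> : Zs - Xst = Q *m (- Dn) *m Q^T.
    by rewrite hdec /Xst -/Dg -mulmxBl -mulmxBr hDg addrAC subrr add0r.
  rewrite ipm_conj mulmxBr mulmxBl conjK // ipmBr.
  have ipmNl : forall M N : 'M[R]_n, ipm (- M) N = - ipm M N.
    by move=> M N; rewrite ipmC ipmNr ipmC.
  rewrite !ipmNl /Dn !ipm_diag.
  have -> : \sum_i (\row_i0 en r lam i0) 0 i * Dp i i = 0.
    by apply: big1 => i _; rewrite !mxE eqxx mulr1n mulrC dpen.
  rewrite oppr0 subr0 oppr_le0; apply: sumr_ge0 => i _; rewrite mxE.
  by apply: mulr_ge0 => //; rewrite -qf_col; case: pW => _; apply.
have hXst : proj_psd Zs = Xst by apply: proj_eqX.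
pose q := l1 Q.
have q0 : 0 <= q by exact: l1_ge0.
pose nn : R := (n * n)%:R.
have nn0 : 0 <= nn by rewrite /nn ler0n.
pose c := q * q * nn.
have c0 : 0 <= c by rewrite /c !mulr_ge0.
pose eps := del / (6 * (c + 1)).
have eps0 : 0 < eps by rewrite /eps divr_gt0 //; lra.
have [N hN] := hconv eps eps0.
pose K := KP As.
have K0 : 0 <= K by exact: KP_ge0.
pose alpha := (1 + 2 * K) * (q * q) * 53 * c * nn / del + 1.
have alpha0' : 0 <= (1 + 2 * K) * (q * q) * 53 * c * nn / del.
  by rewrite divr_ge0 ?(ltW del0) // !mulr_ge0 //; lra.
exists N, alpha; split; first by rewrite /alpha; lra.
move=> k hk.
have hh := hN k hk.
set H := Z k - Zs in hh *.
set h := fro H in hh *.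
have h0 : 0 <= h by exact: sqrtr_ge0.
set X := proj_psd (Z k).
have hX : isproj (Z k) X by exact: proj_isproj.
pose E := X - Xst.
have hEH : fro E <= h.
  rewrite /h !fro_sqm ler_sqrt; last exact: sqm_ge0.
  exact: proj_nonexp hX pZs.
have l1E : l1 E <= nn * h.
  by apply: l1_const => i j; apply: le_trans (fro_entry _ _ _) hEH.
have l1H : l1 H <= nn * h.
  by apply: l1_const => i j; exact: fro_entry.
pose E' := Q^T *m E *m Q.
pose H' := Q^T *m H *m Q.
pose eta := c * h.
have l1conj : forall M : 'M[R]_n, l1 M <= nn * h -> l1 (Q^T *m M *m Q) <= eta.
  move=> M hM; apply: le_trans (l1_mul _ _) _.
  apply: le_trans (ler_wpM2r q0 (l1_mul _ _)) _.
  rewrite l1_tr /eta /c -/q.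
  have hM0 : 0 <= l1 M by exact: l1_ge0.
  have := ler_wpM2l q0 hM; move=> hh1.
  have := ler_wpM2r q0 hh1; move=> hh2.
  apply: le_trans hh2 _; rewrite -!mulrA; apply: ler_wpM2l => //.
  by rewrite mulrA mulrC.
have l1E' : l1 E' <= eta by exact: l1conj.
have l1H' : l1 H' <= eta by exact: l1conj.
have symE : symmx E by apply: symB => //; exact: sym_proj.
have symH : symmx H by apply: symB.
have sE' : E'^T = E' by rewrite /E' !trmx_mul trmxK symE !mulmxA.
have sH' : H'^T = H' by rewrite /H' !trmx_mul trmxK symH !mulmxA.
have hcomm : X *m (X - Z k) = 0 by apply: proj_comm => //.
have e1 : Dp + E' = Q^T *m X *m Q.
  by rewrite /E' /E mulmxBr mulmxBl /Xst conjK // addrC subrK.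
have e2 : Dn + (E' - H') = Q^T *m (X - Z k) *m Q.
  have -> : Z k = Zs + H by rewrite /H addrC subrK.
  rewrite mulmxBr mulmxBl mulmxDr mulmxDl hdec conjK // -/Dg hDg -/H'.
  by rewrite -e1 zmod_id1.
have key : (Dp + E') *m (Dn + (E' - H')) = 0.
  rewrite e1 e2 !mulmxA -[Q^T *m X *m Q *m Q^T]mulmxA hQQ' mulmx1.
  by rewrite -(mulmxA Q^T) hcomm mulmx0 mul0mx.
set F := E' - H' in key.
have heq : forall i j, dp r lam i * F i j + E' i j * en r lam j + (E' *m F) i j = 0.
  move=> i j; move: key; rewrite mulmxDl !mulmxDr.
  move: (E' *m F) => P key.
  have := congr1 (fun M : 'M[R]_n => M i j) key; rewrite /= /Dp /Dn !mul_diag_mx mul_mx_diag !mxE.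
  by rewrite mulrnAr dpen mul0rn add0r => hq; rewrite -[RHS]hq; ring.
have h6 : 6 * eta <= del.
  have : h * (6 * (c + 1)) < del by rewrite -ltr_pdivlMr //; lra.
  rewrite /eta; have := mulr_ge0 c0 h0; nra.
have blk := block_est del0 hlX hlS sE' sH' heq l1E' l1H' h6.
set W' := E' - map2_mx *%R (Omega r lam) H' in blk.
set HO := fro_HO r Q H.
have HO0 : 0 <= HO by exact: sqrtr_ge0.
have hO : L (pS r) (pX r) H' <= nn * HO.
  apply: l1_const => i j; rewrite mxE; case: ifP => [/andP[pi pj]|_]; last first.
    by rewrite normr0.
  rewrite /HO /fro_HO /= -sqrtr_sqr ler_sqrt; last first.
    by apply: sumr_ge0 => i0 _; apply: sumr_ge0 => j0 _; exact: sqr_ge0.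
  rewrite /pS /pX /= in pi pj.
  rewrite (bigD1 i) /=; last by rewrite leqNgt.
  rewrite (bigD1 j) //= -addrA lerDl; apply: addr_ge0.
    by apply: sumr_ge0 => j0 _; exact: sqr_ge0.
  by apply: sumr_ge0 => i0 _; apply: sumr_ge0 => j0 _; exact: sqr_ge0.
have o0 : 0 <= L (pS r) (pX r) H' by exact: L_ge0.
have hW : X - Xst - calD r Q lam H = Q *m W' *m Q^T.
  by rewrite /W' mulmxBr mulmxBl /E' conjK' // /calD.
have lW'0 : 0 <= l1 W' by exact: l1_ge0.
have lW' : l1 W' <= 53 * eta * (nn * HO) / del.
  rewrite ler_pdivlMr // mulrC; apply: le_trans blk _.
  apply: ler_wpM2l; last exact: hO.
  by rewrite mulr_ge0 // /eta mulr_ge0.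
have lWo : l1 (X - Xst - calD r Q lam H) <= q * q * l1 W'.
  rewrite hW; apply: le_trans (l1_mul _ _) _; rewrite l1_tr -/q.
  apply: le_trans (ler_wpM2r q0 (l1_mul _ _)) _; rewrite -/q.
  by rewrite mulrAC.
rewrite /Psi /= hXst -/X.
set Wo := X - Xst - calD r Q lam H in lWo *.
have lWo0 : 0 <= l1 Wo by exact: l1_ge0.
have hPsi : fro (Wo - 2%:R *: projP As Wo) <= (1 + 2 * K) * l1 Wo.
  apply: le_trans (fro_l1 _) _; apply: le_trans (l1B _ _) _.
  rewrite l1Z ger0_norm //; have := projP_bound As Wo; rewrite -/K; nra.
apply: le_trans hPsi _.
have hK : 0 <= 1 + 2 * K by lra.
apply: le_trans (ler_wpM2l hK lWo) _.
apply: le_trans (ler_wpM2l hK (ler_wpM2l (mulr_ge0 q0 q0) lW')) _.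
have -> : (1 + 2 * K) * (q * q * (53 * eta * (nn * HO) / del)) =
   ((1 + 2 * K) * (q * q) * 53 * c * nn / del) * HO * h.
  by rewrite /eta; field; rewrite gt_eqF.
rewrite /alpha; apply: ler_wpM2r => //; apply: ler_wpM2r => //; lra.
Qed.

End Impl.

Theorem proposition2 (R : realType) (n m : nat)
  (C : 'M[R]_n) (As : 'I_m -> 'M[R]_n) (b : 'cV[R]_m) (sigma : R)
  (Z : nat -> 'M[R]_n)
  (Xs : 'M[R]_n) (ys : 'cV[R]_m) (Ss : 'M[R]_n)
  (Q : 'M[R]_n) (lam : 'I_n -> R) :
  symmx C ->
  (forall i, symmx (As i)) ->
  surjective_opA As ->
  0 < sigma ->
  symmx (Z 0%N) ->
  (forall k, Z k.+1 = admm_step As b C sigma (Z k)) ->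
  KKT As b C Xs ys Ss ->
  (\rank Xs + \rank Ss)%N = n ->
  (* Z^(k) -> Z_star := X_star - sigma S_star *)
  (forall e : R, 0 < e -> exists N : nat, forall k, (N <= k)%N ->
      fro (Z k - (Xs - sigma *: Ss)) < e) ->
  (* spectral decomposition of Z_star *)
  Q^T *m Q = 1%:M -> Q *m Q^T = 1%:M ->
  Xs - sigma *: Ss = Q *m diag_mx (\row_i lam i) *m Q^T ->
  (forall i j : 'I_n, (i <= j)%N -> lam j <= lam i) ->
  (forall i : 'I_n, (i < \rank Xs)%N -> 0 < lam i) ->
  (forall i : 'I_n, (\rank Xs <= i)%N -> lam i < 0) ->
  exists kbar : nat, exists alpha : R, 0 < alpha /\
    forall k : nat, (kbar <= k)%N ->
      fro (Psi (\rank Xs) As Q lam (Xs - sigma *: Ss) (Z k))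
      <= alpha * fro_HO (\rank Xs) Q (Z k - (Xs - sigma *: Ss))
               * fro (Z k - (Xs - sigma *: Ss)).
Proof.
exact: (@main_gen R n m (fun A => exists_min A) C As b sigma Z Xs ys Ss Q lam).
Qed.
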